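(* Let $T$ be the log-partition function of a regular minimal exponential family and let the market cost function be $C=T$ (the generalized LMSR). Suppose an agent has exponential utility $U_a(w)=-\frac1a e^{-aw}$ with $a>0$ and belief $p(\cdot;\hat\theta)$ with $\hat\theta\in\Theta$, and the current market state is $\theta\in\Theta$. Then the portfolio $\delta$ maximizing the agent's expected utility of profit $\langle\delta,\phi(x)\rangle-[C(\theta+\delta)-C(\theta)]$ is unique, equal to $\delta=(\hat\theta-\theta)/(1+a)$, so that the new state is $\theta+\delta=\frac{1}{1+a}\hat\theta+\frac{a}{1+a}\theta$.
   Context: Exponential family with sufficient statistic $\phi:\mathcal{X}\to\mathbb{R}^d$ and base measure $\nu$: $p(x;\theta)=\exp(\langle\theta,\phi(x)\rangle-T(\theta))$, $T(\theta)=\log\int_{\mathcal{X}}\exp\langle\theta,\phi(x)\rangle\,d\nu(x)$, $\Theta=\{\theta:T(\theta)<\infty\}$, assumed open (regular) and with no nonzero $\alpha$ making $\langle\alpha,\phi\rangle$ constant $\nu$-a.e. (minimal). In a cost-function market with cost $C$, buying portfolio $\delta$ at state $\theta$ costs $C(\theta+\delta)-C(\theta)$, moves the state to $\theta+\delta$, and pays $\langle\delta,\phi(x)\rangle$ when outcome $x$ occurs. *)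

(* Defs.v *)
From HB Require Import structures.
From mathcomp Require Import all_boot all_order all_algebra.
From mathcomp Require Import all_classical all_reals all_analysis.
Set Implicit Arguments. Unset Strict Implicit. Unset Printing Implicit Defensive.
Import Order.TTheory GRing.Theory Num.Theory.
Import numFieldNormedType.Exports.
Local Open Scope classical_set_scope.
Local Open Scope ring_scope.

Section ExpFam.
Context {R : realType} {n : nat} {dX : measure_display} {X : measurableType dX}.
Variables (nu : {measure set X -> \bar R}) (phi : X -> 'rV[R]_n).

Definition dotp (th v : 'rV[R]_n) : R := \sum_(i < n) th 0 i * v 0 i.

Definition partfun (th : 'rV[R]_n) : \bar R :=
  (\int[nu]_x (expR (dotp th (phi x)))%:E)%E.

Definition Theta : set 'rV[R]_n := [set th | (partfun th < +oo)%E].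

(* log-partition function T (meaningful on Theta) *)
Definition logpart (th : 'rV[R]_n) : R := ln (fine (partfun th)).

Definition regular_family : Prop := open Theta.

Definition minimal_family : Prop :=
  forall alpha : 'rV[R]_n,
    (exists c : R, {ae nu, forall x, dotp alpha (phi x) = c}) -> alpha = 0.

Definition density (th : 'rV[R]_n) (x : X) : R :=
  expR (dotp th (phi x) - logpart th).

Definition exp_utility (a w : R) : R := - a^-1 * expR (- a * w).

Definition profit (C : 'rV[R]_n -> R) (th delta : 'rV[R]_n) (x : X) : R :=
  dotp delta (phi x) - (C (th + delta) - C th).

Definition expected_utility (C : 'rV[R]_n -> R) (a : R)
    (thhat th delta : 'rV[R]_n) : \bar R :=
  (\int[nu]_x (exp_utility a (profit C th delta x) * density thhat x)%:E)%E.

End ExpFam.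

(* Main.v *)
Require Import Defs.
From HB Require Import structures.
From mathcomp Require Import all_boot all_order all_algebra.
From mathcomp Require Import all_classical all_reals all_analysis.
From mathcomp Require Import ring lra measurable_realfun.
Import Order.TTheory GRing.Theory Num.Theory.
Import numFieldNormedType.Exports.
Local Open Scope classical_set_scope.
Local Open Scope ring_scope.


Section H.
Context {R : realType} {n : nat}.

Lemma dotpD (u v w : 'rV[R]_n) : dotp (u + v) w = dotp u w + dotp v w.
Proof. by rewrite /dotp -big_split; apply: eq_bigr => i _; rewrite !mxE mulrDl. Qed.
Lemma dotpZ (k : R) (u w : 'rV[R]_n) : dotp (k *: u) w = k * dotp u w.
Proof. by rewrite /dotp mulr_sumr; apply: eq_bigr => i _; rewrite !mxE mulrA. Qed.
Lemma dotpN (u w : 'rV[R]_n) : dotp (- u) w = - dotp u w.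
Proof. by rewrite -scaleN1r dotpZ mulN1r. Qed.
Lemma dotpB (u v w : 'rV[R]_n) : dotp (u - v) w = dotp u w - dotp v w.
Proof. by rewrite dotpD dotpN. Qed.

Lemma pw_ineq (s p q : R) : 0 < s < 1 ->
  expR (s * p + (1 - s) * q) <= s * expR p + (1 - s) * expR q /\
  (p != q -> expR (s * p + (1 - s) * q) < s * expR p + (1 - s) * expR q).
Proof.
move=> /andP[s0 s1].
have ep : p = (s * p + (1 - s) * q) + (1 - s) * (p - q) by ring.
have eqq : q = (s * p + (1 - s) * q) + (- s * (p - q)) by ring.
have key : s * expR p + (1 - s) * expR q =
   expR (s * p + (1 - s) * q) *
     (s * expR ((1 - s) * (p - q)) + (1 - s) * expR (- s * (p - q))).
  by rewrite mulrDr !mulrA ![expR _ * _]mulrC -!mulrA -!expRD -ep -eqq.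
rewrite key; have ey := expR_gt0 (s * p + (1 - s) * q).
have h1 : 1 = s * (1 + (1 - s) * (p - q)) + (1 - s) * (1 + (- s * (p - q))) by ring.
split.
  rewrite -[X in X <= _]mulr1 ler_pM2l //.
  rewrite [X in X <= _]h1 lerD // ler_pM2l ?expR_ge1Dx //; lra.
move=> pq; rewrite -[X in X < _]mulr1 ltr_pM2l //.
have d0 : p - q != 0 by rewrite subr_eq0.
rewrite [X in X < _]h1 ltr_leD // ?ler_pM2l ?ltr_pM2l ?expR_ge1Dx ?expR_gt1Dx //;
  try lra.
by rewrite mulf_neq0 // subr_eq0 eq_sym; apply/negP => /eqP; lra.
Qed.
Lemma expRNln_mul (A : R) : 0 < A -> expR (- ln A) * A = 1.
Proof. by move=> A0; rewrite expRN lnK ?posrE // mulVf // gt_eqF. Qed.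
Lemma e1_lem (s A B : R) : 0 < A -> 0 < B ->
  s * expR (- ln A) * A + (1 - s) * expR (- ln B) * B = 1.
Proof. by move=> A0 B0; rewrite -!mulrA !expRNln_mul //; ring. Qed.
Lemma E2_alg (a t d h lA lB : R) : 1 + a != 0 ->
  a / (1 + a) * ((t + d) - lA) + (1 - a / (1 + a)) * ((h + - (a * d)) - lB)
  = - (a / (1 + a) * lA + (1 - a / (1 + a)) * lB) + ((1 + a)^-1 * h + a / (1 + a) * t).
Proof. by move=> an; field. Qed.
Lemma hK_alg (a lA lB : R) : 1 + a != 0 ->
  (1 + a) * (a / (1 + a) * lA + (1 - a / (1 + a)) * lB) = a * lA + lB.
Proof. by move=> an; field. Qed.
Lemma fin_alg (a x y z c1 c2 : R) : (1 + a) * x < a * y + z ->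
  a * x - a * c1 - c2 + x < a * y - a * c1 - c2 + z.
Proof. by rewrite mulrDl mul1r => h; lra. Qed.
End H.


Section M.
Context {R : realType} {n : nat} {dX : measure_display} {X : measurableType dX}.
Variables (nu : {measure set X -> \bar R}) (phi : X -> 'rV[R]_n).
Hypothesis phi_meas : forall i : 'I_n, measurable_fun setT (fun x => phi x 0 i).

Lemma mdot (v : 'rV[R]_n) : measurable_fun setT (fun x => dotp v (phi x)).
Proof.
rewrite /dotp; apply: measurable_sum => i.
by apply: measurable_funM => //; exact: phi_meas.
Qed.

Lemma mexpaff (v : 'rV[R]_n) (c : R) :
  measurable_fun setT (fun x => expR (dotp v (phi x) - c)).
Proof.
have h : measurable_fun setT (fun x => dotp v (phi x) - c).
  by apply: measurable_funB; [exact: mdot | exact: measurable_cst].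
by apply: measurableT_comp.
Qed.

Lemma mEfin (f : X -> R) : measurable_fun setT f ->
  measurable_fun [set: X] (EFin \o f).
Proof. by move=> mf; apply/measurable_EFinP. Qed.

Lemma int0_ae (f : X -> R) : measurable_fun setT f -> (forall x, 0 <= f x) ->
  (\int[nu]_x (f x)%:E = 0)%E -> {ae nu, forall x, f x = 0}.
Proof.
move=> mf f0 h.
have : (\int[nu]_x `|(f x)%:E| = 0)%E.
  by rewrite -h; apply: eq_integral => x _; rewrite gee0_abs // lee_fin.
move/(ae_eq_integral_abs nu measurableT (mEfin _ mf)).
by apply: filterS => x /(_ I) [].
Qed.

Lemma partfun_ge0 v : (0 <= partfun nu phi v)%E.
Proof. by apply: integral_ge0 => x _; rewrite lee_fin expR_ge0. Qed.

Lemma Theta_fin v : Theta nu phi v -> partfun nu phi v = (fine (partfun nu phi v))%:E.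
Proof.
by move=> h; rewrite fineK // ge0_fin_numE ?partfun_ge0.
Qed.

Lemma intZ (k : R) (v : 'rV[R]_n) : 0 <= k ->
  (\int[nu]_x (k%:E * (expR (dotp v (phi x)))%:E) = k%:E * partfun nu phi v)%E.
Proof.
move=> k0; apply: (ge0_integralZl_EFin nu measurableT _ _ k0).
- by move=> x _; rewrite lee_fin expR_ge0.
- by apply: mEfin; apply: measurableT_comp => //; exact: mdot.
Qed.

Lemma key (u w : 'rV[R]_n) (cu cw s : R) : 0 < s < 1 ->
  (\int[nu]_x (expR (s * (dotp u (phi x) - cu) + (1 - s) * (dotp w (phi x) - cw)))%:E
   + \int[nu]_x (s * expR (dotp u (phi x) - cu) + (1 - s) * expR (dotp w (phi x) - cw)
         - expR (s * (dotp u (phi x) - cu) + (1 - s) * (dotp w (phi x) - cw)))%:E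
  = (s * expR (- cu))%:E * partfun nu phi u + ((1 - s) * expR (- cw))%:E * partfun nu phi w)%E.
Proof.
move=> s01; have /andP[s0 s1] := s01.
have mg : measurable_fun setT (fun x =>
    expR (s * (dotp u (phi x) - cu) + (1 - s) * (dotp w (phi x) - cw))).
  apply: measurableT_comp => //.
  apply: measurable_funD; apply: measurable_funM; try exact: measurable_cst;
  (apply: measurable_funB; [exact: mdot | exact: measurable_cst]).
have h1 : forall x, [set: X] x -> (0 <= (expR (s * (dotp u (phi x) - cu) + (1 - s) * (dotp w (phi x) - cw)))%:E)%E.
  by move=> x _; rewrite lee_fin expR_ge0.
have h3 : forall x, [set: X] x -> (0 <= (s * expR (dotp u (phi x) - cu) + (1 - s) * expR (dotp w (phi x) - cw)
         - expR (s * (dotp u (phi x) - cu) + (1 - s) * (dotp w (phi x) - cw)))%:E)%E.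
  by move=> x _; rewrite lee_fin subr_ge0; have [] := pw_ineq s (dotp u (phi x) - cu) (dotp w (phi x) - cw) s01.
have h4 : measurable_fun [set: X] (EFin \o (fun x => s * expR (dotp u (phi x) - cu) + (1 - s) * expR (dotp w (phi x) - cw)
         - expR (s * (dotp u (phi x) - cu) + (1 - s) * (dotp w (phi x) - cw)))).
  apply: mEfin; apply: measurable_funB => //.
  by apply: measurable_funD; apply: measurable_funM;
     (exact: measurable_cst || exact: mexpaff).
rewrite -(ge0_integralD nu measurableT h1 (mEfin _ mg) h3 h4).
transitivity (\int[nu]_x ((s * expR (- cu))%:E * (expR (dotp u (phi x)))%:E
     + ((1 - s) * expR (- cw))%:E * (expR (dotp w (phi x)))%:E))%E.
  apply: eq_integral => x _; rewrite -!EFinM -EFinD; congr EFin.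
  by rewrite !(addrC (dotp _ _)) !expRD; ring.
rewrite ge0_integralD //; last 4 first.
- by move=> x _; rewrite -EFinM lee_fin !mulr_ge0 ?expR_ge0 //; lra.
- by apply: mEfin; apply: measurable_funM; [exact: measurable_cst|
     apply: measurableT_comp => //; exact: mdot].
- by move=> x _; rewrite -EFinM lee_fin !mulr_ge0 ?expR_ge0 //; lra.
- by apply: mEfin; apply: measurable_funM; [exact: measurable_cst|
     apply: measurableT_comp => //; exact: mdot].
rewrite !intZ //; rewrite !mulr_ge0 ?expR_ge0 //; lra.
Qed.

Lemma Fint_ge0 (u w : 'rV[R]_n) (cu cw s : R) : 0 < s < 1 ->
  (0 <= \int[nu]_x (s * expR (dotp u (phi x) - cu) + (1 - s) * expR (dotp w (phi x) - cw)
         - expR (s * (dotp u (phi x) - cu) + (1 - s) * (dotp w (phi x) - cw)))%:E)%E.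
Proof.
move=> s01; apply: integral_ge0 => x _; rewrite lee_fin subr_ge0.
by have [] := pw_ineq s (dotp u (phi x) - cu) (dotp w (phi x) - cw) s01.
Qed.

Lemma Fint_eq0 (u w : 'rV[R]_n) (cu cw s : R) : 0 < s < 1 ->
  (\int[nu]_x (s * expR (dotp u (phi x) - cu) + (1 - s) * expR (dotp w (phi x) - cw)
         - expR (s * (dotp u (phi x) - cu) + (1 - s) * (dotp w (phi x) - cw)))%:E = 0)%E ->
  {ae nu, forall x, dotp (u - w) (phi x) = cu - cw}.
Proof.
move=> s01 I20.
have mF : measurable_fun [set: X] (fun x =>
    s * expR (dotp u (phi x) - cu) + (1 - s) * expR (dotp w (phi x) - cw)
    - expR (s * (dotp u (phi x) - cu) + (1 - s) * (dotp w (phi x) - cw))).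
  apply: measurable_funB.
    by apply: measurable_funD; apply: measurable_funM;
      (exact: measurable_cst || exact: mexpaff).
  apply: measurableT_comp => //.
  apply: measurable_funD; apply: measurable_funM; try exact: measurable_cst;
  (apply: measurable_funB; [exact: mdot | exact: measurable_cst]).
have F0 : forall x, 0 <= s * expR (dotp u (phi x) - cu) + (1 - s) * expR (dotp w (phi x) - cw)
    - expR (s * (dotp u (phi x) - cu) + (1 - s) * (dotp w (phi x) - cw)).
  move=> x; rewrite subr_ge0.
  by have [] := pw_ineq s (dotp u (phi x) - cu) (dotp w (phi x) - cw) s01.
have hae := int0_ae _ mF F0 I20.
move: hae; apply: filterS => x hx.
rewrite dotpB.
have [pq|pq] := eqVneq (dotp u (phi x) - cu) (dotp w (phi x) - cw).
  by move/eqP: pq; lra.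
have [_ hs] := pw_ineq s (dotp u (phi x) - cu) (dotp w (phi x) - cw) s01.
by have := hs pq; move: hx; lra.
Qed.
End M.


Section N.
Context {R : realType} {n : nat} {dX : measure_display} {X : measurableType dX}.
Variables (nu : {measure set X -> \bar R}) (phi : X -> 'rV[R]_n).
Hypothesis phi_meas : forall i : 'I_n, measurable_fun setT (fun x => phi x 0 i).

Lemma EU_eq (a : R) (thhat th delta : 'rV[R]_n) : 0 < a ->
  expected_utility nu phi (logpart nu phi) a thhat th delta =
  (- ((a^-1 * expR (a * logpart nu phi (th + delta) - a * logpart nu phi th
        - logpart nu phi thhat))%:E * partfun nu phi (thhat - a *: delta)))%E.
Proof.
move=> a0.
set k := a^-1 * _.
have k0 : 0 <= k by rewrite /k mulr_ge0 ?expR_ge0 ?invr_ge0 // ltW.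
rewrite /expected_utility.
transitivity (\int[nu]_x (- (k%:E * (expR (dotp (thhat - a *: delta) (phi x)))%:E)))%E.
  apply: eq_integral => x _; rewrite -EFinM -EFinN; congr EFin.
  rewrite /exp_utility /profit /density /k dotpB dotpZ.
  rewrite !mulNr -!mulrA -!expRD; congr (- (_ * expR _)); ring.
rewrite integralN; first by rewrite intZ.
apply: fin_num_adde_defl.
have -> : (\int[nu]_x (fun x => (k%:E * (expR (dotp (thhat - a *: delta) (phi x)))%:E)%E)^\- x = 0)%E.
  rewrite -(integral0 nu setT); apply: eq_integral => x _.
  apply: (ge0_funenegE (D := setT)); last by rewrite in_setT.
  by move=> y _; rewrite -EFinM lee_fin mulr_ge0 ?expR_ge0.
by rewrite oppe0.
Qed.

Lemma Z0_ae (v : 'rV[R]_n) (P : X -> Prop) :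
  partfun nu phi v = 0%E -> {ae nu, forall x, P x}.
Proof.
move=> Z0.
have mf : measurable_fun [set: X] (fun x => expR (dotp v (phi x))).
  by apply: measurableT_comp => //; exact: mdot.
have := int0_ae nu (fun x => expR (dotp v (phi x))) mf (fun x => expR_ge0 _) Z0.
apply: filterS => x h; exfalso.
by move: (expR_gt0 (dotp v (phi x))); rewrite h ltxx.
Qed.
End N.


Theorem theorem3 (R : realType) (n : nat) (dX : measure_display)
  (X : measurableType dX) (nu : {measure set X -> \bar R})
  (phi : X -> 'rV[R]_n)
  (phi_meas : forall i : 'I_n, measurable_fun setT (fun x => phi x 0 i))
  (Hreg : regular_family nu phi) (Hmin : minimal_family nu phi)
  (a : R) (Ha : 0 < a) (thhat th : 'rV[R]_n)
  (Hthhat : Theta nu phi thhat) (Hth : Theta nu phi th) :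
  let C := logpart nu phi in
  let dstar := (1 + a)^-1 *: (thhat - th) in
  [/\ Theta nu phi (th + dstar),
      th + dstar = (1 + a)^-1 *: thhat + (a / (1 + a)) *: th &
      forall delta : 'rV[R]_n, Theta nu phi (th + delta) -> delta <> dstar ->
        (expected_utility nu phi C a thhat th delta
          < expected_utility nu phi C a thhat th dstar)%E].
Proof.
move=> C dstar.
have a1 : 0 < 1 + a by lra.
have a1n : 1 + a != 0 by rewrite gt_eqF.
set s := a / (1 + a).
have s1 : 1 - s = (1 + a)^-1 by rewrite /s; field.
have s01 : 0 < s < 1.
  have : 0 < (1 + a)^-1 by rewrite invr_gt0.
  move=> hi; apply/andP; split; first by rewrite /s divr_gt0.
  have := s1; lra.
set m := (1 + a)^-1 *: thhat + (a / (1 + a)) *: th.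
have Hm : th + dstar = m.
  by apply/rowP => i; rewrite /m /dstar !mxE; field.
have Thm : Theta nu phi m.
  have hk := key nu phi phi_meas th thhat 0 0 s s01.
  have E1 : (\int[nu]_x (expR (s * (dotp th (phi x) - 0) + (1 - s) * (dotp thhat (phi x) - 0)))%:E
      = partfun nu phi m)%E.
    apply: eq_integral => x _; rewrite /m dotpD !dotpZ s1 !subr0 /s.
    by congr (expR _)%:E; ring.
  rewrite E1 (Theta_fin nu phi th Hth) (Theta_fin nu phi thhat Hthhat) -!EFinM -EFinD in hk.
  rewrite /Theta /=.
  have : (partfun nu phi m <= (s * expR (- 0) * fine (partfun nu phi th)
     + (1 - s) * expR (- 0) * fine (partfun nu phi thhat))%:E)%E.
    rewrite -hk leeDl // integral_ge0 // => x _; rewrite lee_fin subr_ge0.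
    by have [] := pw_ineq s (dotp th (phi x) - 0) (dotp thhat (phi x) - 0) s01.
  by move/le_lt_trans; apply; exact: ltry.
split.
- by rewrite Hm.
- by rewrite Hm.
move=> delta Hd Hne.
have Zne0 : forall v, partfun nu phi v != 0%E.
  move=> v; apply/eqP => Z0; apply: Hne; apply/eqP; rewrite -subr_eq0; apply/eqP.
  apply: Hmin; exists 0; exact: (Z0_ae nu phi phi_meas v _ Z0).
have Zpos : forall v, Theta nu phi v -> 0 < fine (partfun nu phi v).
  move=> v hv; have := partfun_ge0 nu phi v.
  rewrite (Theta_fin nu phi v hv) lee_fin le_eqVlt => /orP[/eqP h|//].
  by exfalso; move: (Zne0 v); rewrite (Theta_fin nu phi v hv) -h eqxx.
have Hw : thhat - a *: dstar = m.
  by apply/rowP => i; rewrite /m /dstar !mxE; field.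
rewrite /C !(EU_eq nu phi phi_meas) // Hm Hw lteN2.
have hdm : forall x, dotp m (phi x) = (1 + a)^-1 * dotp thhat (phi x) + a / (1 + a) * dotp th (phi x).
  by move=> x; rewrite /m dotpD !dotpZ.
clearbody m.
have A0 := Zpos _ Hd; have M0 := Zpos _ Thm.
rewrite (Theta_fin nu phi m Thm).
have [Zwoo | Zwfin] := eqVneq (partfun nu phi (thhat - a *: delta)) +oo%E.
  rewrite Zwoo [X in (_ < X)%E]muleC gt0_mulye.
    by rewrite -EFinM; exact: ltry.
  by rewrite lte_fin; apply: mulr_gt0; [rewrite invr_gt0 | exact: expR_gt0].
have Tw : Theta nu phi (thhat - a *: delta).
  by rewrite /Theta /= lt_neqAle Zwfin leey.
have B0 := Zpos _ Tw.
rewrite (Theta_fin nu phi _ Tw) -[X in (X < _)%E]EFinM -[X in (_ < X)%E]EFinM lte_fin /logpart.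
move eA : (fine (partfun nu phi (th + delta))) A0 => A A0.
move eB : (fine (partfun nu phi (thhat - a *: delta))) B0 => B B0.
move eM : (fine (partfun nu phi m)) M0 => M M0.
have hk := key nu phi phi_meas (th + delta) (thhat - a *: delta) (ln A) (ln B) s s01.
pose K := s * ln A + (1 - s) * ln B.
have E2 : (\int[nu]_x (expR (s * (dotp (th + delta) (phi x) - ln A)
     + (1 - s) * (dotp (thhat - a *: delta) (phi x) - ln B)))%:E
     = (expR (- K) * M)%:E)%E.
  transitivity (\int[nu]_x ((expR (- K))%:E * (expR (dotp m (phi x)))%:E))%E.
    apply: eq_integral => x _; rewrite -EFinM -expRD; congr (expR _)%:E.
    rewrite /K hdm !dotpD ?dotpN !dotpZ.
    exact: E2_alg.
  by rewrite (intZ nu phi phi_meas) ?expR_ge0 // (Theta_fin nu phi m Thm) eM -EFinM.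
rewrite E2 (Theta_fin nu phi _ Hd) (Theta_fin nu phi _ Tw) eA eB in hk.
rewrite -[X in (_ = X + _)%E]EFinM -[X in (_ = _ + X)%E]EFinM in hk.
have e1 := e1_lem s A B A0 B0.
rewrite -[X in (_ = X)%E]EFinD e1 in hk.
move: hk; set I2 := (X in (_ + X = _)%E) => hk.
have I2ge0 : (0 <= I2)%E := Fint_ge0 nu phi (th + delta) (thhat - a *: delta) (ln A) (ln B) s s01.
have I2ne0 : I2 != 0%E.
  apply/eqP => I20.
  have huw : (th + delta) - (thhat - a *: delta) = 0.
    apply: Hmin; exists (ln A - ln B).
    exact: (Fint_eq0 nu phi phi_meas (th + delta) (thhat - a *: delta) (ln A) (ln B) s s01 I20).
  apply: Hne; apply/rowP => i; have := congr1 (fun N : 'rV[R]_n => N 0 i) huw.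
  rewrite /dstar !mxE => h'; apply: (mulfI a1n).
  by rewrite mulrA divff // mul1r; lra.
have I2pos : (0 < I2)%E by rewrite lt_neqAle eq_sym I2ne0 I2ge0.
have lt1 : expR (- K) * M < 1.
  by rewrite -lte_fin -hk lteDl.
have hlnM : ln M < K.
  have : expR (ln M + - K) < expR 0.
    by rewrite expRD lnK ?posrE // expR0 mulrC.
  by rewrite ltr_expR; lra.
have hK : (1 + a) * K = a * ln A + ln B by exact: hK_alg.
have h2 : (1 + a) * ln M < a * ln A + ln B by rewrite -hK ltr_pM2l.
have eM2 : forall c, a^-1 * expR c * M = a^-1 * expR (c + ln M).
  by move=> c; rewrite expRD lnK ?posrE // mulrA.
have eB2 : forall c, a^-1 * expR c * B = a^-1 * expR (c + ln B).
  by move=> c; rewrite expRD lnK ?posrE // mulrA.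
rewrite eM2 eB2 ltr_pM2l ?invr_gt0 // ltr_expR.
exact: fin_alg.
Qed.
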